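(* For the SVIQR system, the point $E^0$ with $S_k=S_k^0=\frac{\Lambda_k(d+\omega+\alpha)}{(d+\omega+\alpha)d+(d+\alpha)\mu_k}$, $V_k=V_k^0=\frac{\Lambda_k\mu_k}{(d+\omega+\alpha)d+(d+\alpha)\mu_k}$, $I_k=Q_k=0$, $R_k=R_k^0=\frac{\alpha}{d}V_k^0$ ($k=1,\dots,n$) is always an equilibrium, and it is the only equilibrium with $\Theta=0$. Define $$R_0=\frac{1}{\langle k\rangle}\sum_{k=1}^n\varphi(k)p(k)\lambda(k)\frac{\Lambda_k\,(d+\omega+\alpha+\delta\mu_k)}{(\gamma+\beta+d)\big[(d+\alpha+\omega)d+(d+\alpha)\mu_k\big]}.$$ Then the SVIQR system has an equilibrium with nonnegative components and $\Theta>0$ (an endemic equilibrium, in which $I_k>0$ for all $k$) if and only if $R_0>1$, and in that case this endemic equilibrium $E^*$ is unique.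
   Context: Fix an integer $n\ge1$ and numbers $p(1),\dots,p(n)>0$ with $\sum_{k=1}^n p(k)=1$; set $\langle k\rangle=\sum_{k=1}^n kp(k)$. Fix constants $b>d>0$ and let $\Phi^*>0$ satisfy $\Phi^*=\frac{1}{\langle k\rangle}\sum_{i=1}^n \frac{i\,p(i)\,b\Phi^*}{d+bi\Phi^*}$. For $k=1,\dots,n$ put $N_k^*=\frac{bk\Phi^*}{d+bk\Phi^*}\in(0,1)$ and $\Lambda_k=bk(1-N_k^* )\Phi^*$ (so $\Lambda_k=dN_k^*>0$). Parameters: $\lambda(k)>0$, $\varphi(k)>0$, $\mu_k>0$ for $k=1,\dots,n$; constants $\alpha,\beta,\gamma,\eta,\omega>0$ and $\delta\in[0,1]$. Write $\xi=\gamma+\beta+d$. For functions $I_1(t),\dots,I_n(t)$ set $\Theta(t)=\frac{1}{\langle k\rangle}\sum_{i=1}^n\varphi(i)p(i)I_i(t)$. The SVIQR system is, for $k=1,\dots,n$: $S_k'=\Lambda_k-\lambda(k)S_k\Theta+\omega V_k-(\mu_k+d)S_k$, $V_k'=\mu_kS_k-\delta\lambda(k)V_k\Theta-(d+\omega+\alpha)V_k$, $I_k'=\lambda(k)S_k\Theta+\delta\lambda(k)V_k\Theta-(\gamma+\beta+d)I_k$, $Q_k'=\beta I_k-(\eta+d)Q_k$, $R_k'=\gamma I_k+\eta Q_k+\alpha V_k-dR_k$. An equilibrium is a point where all these right-hand sides vanish. *)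

(* Defs.v *)
From Stdlib Require Import Reals Lra Lia.
Open Scope R_scope.

Fixpoint sum1n (n : nat) (f : nat -> R) : R :=
  match n with
  | O => 0
  | S m => sum1n m f + f (S m)
  end.

Definition kavg (n : nat) (p : nat -> R) : R := sum1n n (fun k => INR k * p k).

Definition Nstar (b d Phis : R) (k : nat) : R :=
  b * INR k * Phis / (d + b * INR k * Phis).
Definition Lam (b d Phis : R) (k : nat) : R :=
  b * INR k * (1 - Nstar b d Phis k) * Phis.

Definition Theta (n : nat) (p phi I : nat -> R) : R :=
  / kavg n p * sum1n n (fun i => phi i * p i * I i).

Definition is_equilibrium (n : nat) (p : nat -> R) (b d Phis : R)
  (lam phi mu : nat -> R) (alpha beta gamma eta omega delta : R)
  (S V I Q Rr : nat -> R) : Prop :=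
  let Th := Theta n p phi I in
  forall k, (1 <= k <= n)%nat ->
    Lam b d Phis k - lam k * S k * Th + omega * V k - (mu k + d) * S k = 0 /\
    mu k * S k - delta * lam k * V k * Th - (d + omega + alpha) * V k = 0 /\
    lam k * S k * Th + delta * lam k * V k * Th - (gamma + beta + d) * I k = 0 /\
    beta * I k - (eta + d) * Q k = 0 /\
    gamma * I k + eta * Q k + alpha * V k - d * Rr k = 0.

Definition nonneg_state (n : nat) (S V I Q Rr : nat -> R) : Prop :=
  forall k, (1 <= k <= n)%nat ->
    0 <= S k /\ 0 <= V k /\ 0 <= I k /\ 0 <= Q k /\ 0 <= Rr k.

Definition same_state (n : nat) (S V I Q Rr S' V' I' Q' Rr' : nat -> R) : Prop :=
  forall k, (1 <= k <= n)%nat ->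
    S k = S' k /\ V k = V' k /\ I k = I' k /\ Q k = Q' k /\ Rr k = Rr' k.

Definition denom0 (d alpha omega : R) (mu : nat -> R) (k : nat) : R :=
  (d + omega + alpha) * d + (d + alpha) * mu k.
Definition S0 (b d Phis alpha omega : R) (mu : nat -> R) (k : nat) : R :=
  Lam b d Phis k * (d + omega + alpha) / denom0 d alpha omega mu k.
Definition V0 (b d Phis alpha omega : R) (mu : nat -> R) (k : nat) : R :=
  Lam b d Phis k * mu k / denom0 d alpha omega mu k.
Definition R0comp (b d Phis alpha omega : R) (mu : nat -> R) (k : nat) : R :=
  alpha / d * V0 b d Phis alpha omega mu k.

Definition Rnought (n : nat) (p : nat -> R) (b d Phis : R)
  (lam phi mu : nat -> R) (alpha beta gamma omega delta : R) : R :=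
  / kavg n p * sum1n n (fun k =>
    phi k * p k * lam k * (Lam b d Phis k * (d + omega + alpha + delta * mu k)) /
    ((gamma + beta + d) * ((d + alpha + omega) * d + (d + alpha) * mu k))).

(* Main.v *)
Require Import Defs.
From Stdlib Require Import Reals.
Open Scope R_scope.
From Stdlib Require Import Lra Lia Ranalysis5.

Lemma sum1n_ext n f g : (forall k, (1<=k<=n)%nat -> f k = g k) -> sum1n n f = sum1n n g.
Proof. induction n; simpl; intros H; [reflexivity|].
 rewrite IHn by (intros; apply H; lia). rewrite H by lia. reflexivity. Qed.

Lemma sum1n_le n f g : (forall k, (1<=k<=n)%nat -> f k <= g k) -> sum1n n f <= sum1n n g.
Proof. induction n; simpl; intros H; [lra|].
 assert (sum1n n f <= sum1n n g) by (apply IHn; intros; apply H; lia).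
 assert (f (S n) <= g (S n)) by (apply H; lia). lra. Qed.

Lemma sum1n_lt n f g : (1<=n)%nat -> (forall k, (1<=k<=n)%nat -> f k < g k) -> sum1n n f < sum1n n g.
Proof. destruct n as [|n]; [lia|]. intros _ H; simpl.
 assert (sum1n n f <= sum1n n g) by (apply sum1n_le; intros; left; apply H; lia).
 assert (f (S n) < g (S n)) by (apply H; lia). lra. Qed.

Lemma sum1n_scal n a f : sum1n n (fun k => a * f k) = a * sum1n n f.
Proof. induction n; simpl; [ring|]. rewrite IHn; ring. Qed.

Lemma sum1n_zero n : sum1n n (fun _ => 0) = 0.
Proof. induction n; simpl; [reflexivity|]. rewrite IHn; ring. Qed.

Lemma sum1n_pos n f : (1<=n)%nat -> (forall k, (1<=k<=n)%nat -> 0 < f k) -> 0 < sum1n n f.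
Proof. intros Hn H. rewrite <- (sum1n_zero n). apply sum1n_lt; auto. Qed.

Lemma cp_plus f g a : continuity_pt f a -> continuity_pt g a -> continuity_pt (fun x => f x + g x) a.
Proof. intros; exact (continuity_pt_plus f g a H H0). Qed.
Lemma cp_minus f g a : continuity_pt f a -> continuity_pt g a -> continuity_pt (fun x => f x - g x) a.
Proof. intros; exact (continuity_pt_minus f g a H H0). Qed.
Lemma cp_mult f g a : continuity_pt f a -> continuity_pt g a -> continuity_pt (fun x => f x * g x) a.
Proof. intros; exact (continuity_pt_mult f g a H H0). Qed.
Lemma cp_div f g a : continuity_pt f a -> continuity_pt g a -> g a <> 0 -> continuity_pt (fun x => f x / g x) a.
Proof. intros; exact (continuity_pt_div f g a H H0 H1). Qed.
Lemma cp_const (c a : R) : continuity_pt (fun _ => c) a.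
Proof. apply continuity_pt_const. intros x y; reflexivity. Qed.
Lemma cp_id a : continuity_pt (fun x => x) a.
Proof. apply derivable_continuous_pt. apply derivable_pt_id. Qed.

Lemma cp_inv g a : continuity_pt g a -> g a <> 0 -> continuity_pt (fun x => / g x) a.
Proof. intros; exact (continuity_pt_inv g a H H0). Qed.

Lemma sum1n_cont n (g : nat -> R -> R) a :
  (forall k, (1<=k<=n)%nat -> continuity_pt (g k) a) ->
  continuity_pt (fun x => sum1n n (fun k => g k x)) a.
Proof. induction n; intros H; simpl.
 - apply cp_const.
 - apply (cp_plus (fun x => sum1n n (fun k => g k x)) (g (S n))).
   apply IHn; intros; apply H; lia. apply H; lia. Qed.

Lemma div_lt a b c d : 0<b -> 0<d -> a*d < c*b -> a/b < c/d.
Proof. intros. replace (a/b) with ((a*d)/(b*d)) by (field; lra).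
 replace (c/d) with ((c*b)/(b*d)) by (field; lra).
 apply Rmult_lt_compat_r; auto. apply Rinv_0_lt_compat; nra. Qed.

Lemma div_le a b c d : 0<b -> 0<d -> a*d <= c*b -> a/b <= c/d.
Proof. intros. replace (a/b) with ((a*d)/(b*d)) by (field; lra).
 replace (c/d) with ((c*b)/(b*d)) by (field; lra).
 apply Rmult_le_compat_r; auto. left. apply Rinv_0_lt_compat; nra. Qed.

Ltac cont := repeat first [ apply cp_const | apply cp_id | apply cp_plus | apply cp_minus | apply cp_mult | apply cp_div | apply cp_inv ].
Theorem theorem4p1
  (n : nat) (p : nat -> R) (b d Phis : R)
  (lam phi mu : nat -> R) (alpha beta gamma eta omega delta : R)
  (Hn : (1 <= n)%nat)
  (Hp : forall k, (1 <= k <= n)%nat -> 0 < p k)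
  (Hpsum : sum1n n p = 1)
  (Hbd : b > d) (Hd : d > 0)
  (HPhis : Phis > 0)
  (HPhieq : Phis = / kavg n p *
      sum1n n (fun i => INR i * p i * b * Phis / (d + b * INR i * Phis)))
  (Hlam : forall k, (1 <= k <= n)%nat -> 0 < lam k)
  (Hphi : forall k, (1 <= k <= n)%nat -> 0 < phi k)
  (Hmu : forall k, (1 <= k <= n)%nat -> 0 < mu k)
  (Halpha : 0 < alpha) (Hbeta : 0 < beta) (Hgamma : 0 < gamma)
  (Heta : 0 < eta) (Homega : 0 < omega)
  (Hdelta : 0 <= delta <= 1) :
  let E0S := S0 b d Phis alpha omega mu in
  let E0V := V0 b d Phis alpha omega mu in
  let E0R := R0comp b d Phis alpha omega mu in
  let zero := fun _ : nat => 0 in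
  let EQ := is_equilibrium n p b d Phis lam phi mu alpha beta gamma eta omega delta in
  let endemic := fun S V I Q Rr =>
      EQ S V I Q Rr /\ nonneg_state n S V I Q Rr /\ Theta n p phi I > 0 in
  (* E^0 is an equilibrium *)
  EQ E0S E0V zero zero E0R /\
  (* it is the only equilibrium with Theta = 0 *)
  (forall S V I Q Rr, EQ S V I Q Rr -> Theta n p phi I = 0 ->
     same_state n S V I Q Rr E0S E0V zero zero E0R) /\
  (* an endemic equilibrium exists iff R_0 > 1 *)
  ((exists S V I Q Rr, endemic S V I Q Rr) <->
     Rnought n p b d Phis lam phi mu alpha beta gamma omega delta > 1) /\
  (* in an endemic equilibrium I_k > 0 for all k *)
  (forall S V I Q Rr, endemic S V I Q Rr ->
     forall k, (1 <= k <= n)%nat -> I k > 0) /\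
  (* uniqueness of the endemic equilibrium when R_0 > 1 *)
  (Rnought n p b d Phis lam phi mu alpha beta gamma omega delta > 1 ->
   forall S V I Q Rr S' V' I' Q' Rr',
     endemic S V I Q Rr -> endemic S' V' I' Q' Rr' ->
     same_state n S V I Q Rr S' V' I' Q' Rr').
Proof.
  intros E0S E0V E0R zero EQ endemic.
  assert (Hb : b > 0) by lra.
  assert (HLam : forall k, (1<=k<=n)%nat -> Lam b d Phis k > 0).
  { intros k Hk. unfold Lam, Nstar.
    assert (Hk1 : 1 <= INR k) by (apply (le_INR 1); lia).
    assert (HbkP : b * INR k * Phis > 0) by (apply Rmult_lt_0_compat; [apply Rmult_lt_0_compat|]; lra).
    replace (1 - b * INR k * Phis / (d + b * INR k * Phis)) with (d / (d + b*INR k * Phis)) by (field; lra).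
    assert (d / (d + b*INR k * Phis) > 0) by (apply Rdiv_lt_0_compat; lra).
    apply Rmult_lt_0_compat; [|lra]. apply Rmult_lt_0_compat; [|lra]. apply Rmult_lt_0_compat; lra. }
  assert (HK : kavg n p > 0).
  { unfold kavg. apply sum1n_pos; auto. intros k Hk.
    assert (1 <= INR k) by (apply (le_INR 1); lia). pose proof (Hp k Hk). nra. }
  pose (D := fun x k => (lam k * x + mu k + d) * (delta * lam k * x + (d + omega + alpha)) - omega * mu k).
  assert (HD : forall x k, (1<=k<=n)%nat -> 0 <= x -> D x k > 0).
  { intros x k Hk Hx. unfold D. pose proof (Hlam k Hk); pose proof (Hmu k Hk).
    assert (0 <= lam k * x) by (apply Rmult_le_pos; lra).
    assert (0 <= delta * lam k * x) by (apply Rmult_le_pos; [apply Rmult_le_pos|]; lra).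
    assert ((lam k * x + mu k + d) * (delta * lam k * x + (d + omega + alpha)) >= (mu k + d) * (d + omega + alpha)) by nra.
    nra. }
  pose (Sf := fun x k => Lam b d Phis k * (delta * lam k * x + (d + omega + alpha)) / D x k).
  pose (Vf := fun x k => mu k * Lam b d Phis k / D x k).
  pose (If := fun x k => lam k * x * (Sf x k + delta * Vf x k) / (gamma + beta + d)).
  pose (Qf := fun x k => beta * If x k / (eta + d)).
  pose (Rf := fun x k => (gamma * If x k + eta * Qf x k + alpha * Vf x k) / d).
  pose (G := fun x k => phi k * p k * lam k * (Sf x k + delta * Vf x k) / (gamma + beta + d)).
  pose (F := fun x => / kavg n p * sum1n n (fun k => G x k)).
  assert (Hform : forall S V I Q Rr, EQ S V I Q Rr -> 0 <= Theta n p phi I ->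
   forall k, (1<=k<=n)%nat ->
   S k = Sf (Theta n p phi I) k /\ V k = Vf (Theta n p phi I) k /\ I k = If (Theta n p phi I) k
   /\ Q k = Qf (Theta n p phi I) k /\ Rr k = Rf (Theta n p phi I) k).
  { intros S V I Q Rr H HT k Hk.
    unfold EQ, is_equilibrium in H. cbv zeta in H.
    set (T := Theta n p phi I) in *.
    destruct (H k Hk) as (E1 & E2 & E3 & E4 & E5).
    pose proof (Hlam k Hk); pose proof (Hmu k Hk). pose proof (HD T k Hk HT).
    assert (He : delta * lam k * T + (d + omega + alpha) > 0).
    { assert (0 <= delta * lam k * T) by (apply Rmult_le_pos; [apply Rmult_le_pos|]; lra). lra. }
    assert (Hid: S k * D T k - Lam b d Phis k * (delta*lam k*T + (d+omega+alpha)) =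
       -(delta*lam k*T + (d+omega+alpha)) * (Lam b d Phis k - lam k * S k * T + omega * V k - (mu k + d) * S k)
       - omega * (mu k * S k - delta * lam k * V k * T - (d + omega + alpha) * V k)) by (unfold D; ring).
    rewrite E1, E2 in Hid.
    assert (HS : S k = Sf T k).
    { unfold Sf. apply (Rmult_eq_reg_r (D T k)); [|lra].
      replace (S k * D T k) with (Lam b d Phis k * (delta*lam k*T + (d+omega+alpha))) by lra.
      field. lra. }
    assert (HVe : V k * (delta * lam k * T + (d + omega + alpha)) = mu k * S k) by lra.
    assert (HV : V k = Vf T k).
    { apply (Rmult_eq_reg_r (delta * lam k * T + (d + omega + alpha))); [|lra].
      rewrite HVe, HS. unfold Sf, Vf. field. lra. }
    assert (HI : I k = If T k).
    { unfold If. rewrite <- HS, <- HV. apply (Rmult_eq_reg_r (gamma + beta + d)); [|lra].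
      replace (I k * (gamma + beta + d)) with (lam k * T * (S k + delta * V k)) by lra.
      field. lra. }
    assert (HQ : Q k = Qf T k).
    { unfold Qf. rewrite <- HI. apply (Rmult_eq_reg_r (eta + d)); [|lra].
      replace (Q k * (eta + d)) with (beta * I k) by lra. field. lra. }
    assert (HR : Rr k = Rf T k).
    { unfold Rf. rewrite <- HI, <- HQ, <- HV. apply (Rmult_eq_reg_r d); [|lra].
      replace (Rr k * d) with (gamma * I k + eta * Q k + alpha * V k) by lra. field. lra. }
    auto. }
  assert (HW : forall x k, (1<=k<=n)%nat -> 0 <= x ->
     Sf x k + delta * Vf x k = Lam b d Phis k * (delta * lam k * x + (d + omega + alpha) + delta * mu k) / D x k).
  { intros x k Hk Hx. pose proof (HD x k Hk Hx). unfold Sf, Vf. field. lra. }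
  assert (HGdec : forall x y k, (1<=k<=n)%nat -> 0 <= x < y -> G y k < G x k).
  { intros x y k Hk Hxy.
    pose proof (Hlam k Hk); pose proof (Hmu k Hk); pose proof (Hp k Hk); pose proof (Hphi k Hk).
    pose proof (HLam k Hk).
    pose proof (HD x k Hk (proj1 Hxy)). assert (0 <= y) by lra. pose proof (HD y k Hk H5).
    unfold G. rewrite (HW x k Hk (proj1 Hxy)), (HW y k Hk H5).
    unfold Rdiv. apply Rmult_lt_compat_r. apply Rinv_0_lt_compat; lra.
    apply Rmult_lt_compat_l. apply Rmult_lt_0_compat; [apply Rmult_lt_0_compat|]; lra.
    fold (Rdiv (Lam b d Phis k * (delta * lam k * y + (d + omega + alpha) + delta * mu k)) (D y k)).
    fold (Rdiv (Lam b d Phis k * (delta * lam k * x + (d + omega + alpha) + delta * mu k)) (D x k)).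
    apply div_lt; try lra.
    set (m := d + omega + alpha + delta * mu k).
    assert (Hid : (delta * lam k * x + m) * D y k - (delta * lam k * y + m) * D x k =
       lam k * (y - x) * (delta^2 * lam k ^2 * x * y + m * delta * lam k * (x + y)
         + ((d+omega+alpha)^2 + (d+omega+alpha)*delta*mu k + delta^2*mu k^2 + delta^2 * mu k * d + delta*omega*mu k)))
      by (unfold D, m; ring).
    assert (0 <= delta^2 * lam k ^2 * x * y) by (assert (0 <= x*y) by nra; assert (0 <= delta^2*lam k^2) by nra; nra).
    assert (0 <= m * delta * lam k * (x + y)) by (unfold m; assert (0 <= delta * mu k) by nra;
       assert (0 <= (d + omega + alpha + delta * mu k) * delta) by nra; assert (0 <= lam k * (x+y)) by nra; nra).
    assert (0 < (d+omega+alpha)^2 + (d+omega+alpha)*delta*mu k + delta^2*mu k^2 + delta^2 * mu k * d + delta*omega*mu k).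
    { assert (0 < (d+omega+alpha)^2) by nra. assert (0 <= (d+omega+alpha)*delta*mu k) by (assert (0<= delta * mu k) by nra; nra).
      assert (0 <= delta^2*mu k^2) by nra. assert (0 <= delta^2 * mu k * d) by (assert (0<=delta^2) by nra; nra).
      assert (0 <= delta*omega*mu k) by (assert (0<= delta * omega) by nra; nra). lra. }
    assert (0 < lam k * (y - x)) by nra.
    assert (0 < lam k * (y - x) * (delta^2 * lam k ^2 * x * y + m * delta * lam k * (x + y)
         + ((d+omega+alpha)^2 + (d+omega+alpha)*delta*mu k + delta^2*mu k^2 + delta^2 * mu k * d + delta*omega*mu k))).
    { apply Rmult_lt_0_compat; lra. }
    assert (HH: Lam b d Phis k * (delta * lam k * x + m) * D y k - Lam b d Phis k * (delta * lam k * y + m) * D x k > 0).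
    { replace (Lam b d Phis k * (delta * lam k * x + m) * D y k - Lam b d Phis k * (delta * lam k * y + m) * D x k)
       with (Lam b d Phis k * ((delta * lam k * x + m) * D y k - (delta * lam k * y + m) * D x k)) by ring.
      rewrite Hid. apply Rmult_lt_0_compat; lra. }
    unfold m in HH. lra. }
  assert (HFdec : forall x y, 0 <= x < y -> F y < F x).
  { intros x y Hxy. unfold F. apply Rmult_lt_compat_l. apply Rinv_0_lt_compat; lra.
    apply sum1n_lt; auto. }
  assert (HF0 : F 0 = Rnought n p b d Phis lam phi mu alpha beta gamma omega delta).
  { unfold F, Rnought. f_equal. apply sum1n_ext. intros k Hk.
    pose proof (Hlam k Hk); pose proof (Hmu k Hk).
    unfold G. rewrite (HW 0 k Hk (Rle_refl 0)).
    replace (D 0 k) with ((d + alpha + omega) * d + (d + alpha) * mu k) by (unfold D; ring).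
    assert ((d + alpha + omega) * d + (d + alpha) * mu k > 0) by nra.
    field. lra. }
  assert (HTh : forall x, Theta n p phi (If x) = x * F x).
  { intros x. unfold Theta, F.
    transitivity (/ kavg n p * sum1n n (fun k => x * G x k)).
    - f_equal. apply sum1n_ext. intros k Hk. unfold If, G. unfold Rdiv. ring.
    - rewrite sum1n_scal. change (sum1n n (G x)) with (sum1n n (fun k => G x k)). ring. }
  assert (HGb : forall x k, (1<=k<=n)%nat -> 0 < x ->
     x * G x k <= phi k * p k * Lam b d Phis k * ((d + omega + alpha) + mu k) / ((gamma + beta + d) * (d + omega + alpha))).
  { intros x k Hk Hx.
    pose proof (Hlam k Hk); pose proof (Hmu k Hk); pose proof (Hp k Hk); pose proof (Hphi k Hk).
    pose proof (HLam k Hk). pose proof (HD x k Hk (Rlt_le _ _ Hx)).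
    unfold G. rewrite (HW x k Hk (Rlt_le _ _ Hx)).
    replace (x * (phi k * p k * lam k * (Lam b d Phis k * (delta * lam k * x + (d + omega + alpha) + delta * mu k) / D x k) / (gamma + beta + d)))
      with ((phi k * p k * Lam b d Phis k / (gamma + beta + d)) * ((lam k * x) * (delta * lam k * x + (d + omega + alpha) + delta * mu k) / D x k))
      by (field; lra).
    replace (phi k * p k * Lam b d Phis k * ((d + omega + alpha) + mu k) / ((gamma + beta + d) * (d + omega + alpha)))
      with ((phi k * p k * Lam b d Phis k / (gamma + beta + d)) * (((d + omega + alpha) + mu k) / (d + omega + alpha)))
      by (field; lra).
    apply Rmult_le_compat_l.
    { left. apply Rdiv_lt_0_compat; [|lra]. apply Rmult_lt_0_compat; [apply Rmult_lt_0_compat|]; lra. }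
    apply div_le; try lra.
    set (u := lam k * x).
    assert (Hu : 0 < u) by (unfold u; nra).
    assert (Hid : (d + omega + alpha + mu k) * D x k - (u * (delta * lam k * x + (d + omega + alpha) + delta * mu k)) * (d + omega + alpha)
       = mu k * delta * u^2 + u * ((d+omega+alpha)*delta*d + mu k * (d+omega+alpha) + delta * mu k^2 + delta*mu k*d)
         + (d+omega+alpha+mu k) * ((mu k + d)*(d+omega+alpha) - omega * mu k)) by (unfold D, u; ring).
    assert (0 <= mu k * delta * u^2) by (assert (0 <= mu k * delta) by nra; nra).
    assert (0 <= (d+omega+alpha)*delta*d + mu k * (d+omega+alpha) + delta * mu k^2 + delta*mu k*d).
    { assert (0 <= (d+omega+alpha)*delta*d) by (assert (0 <= (d+omega+alpha)*delta) by nra; nra).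
      assert (0 <= delta * mu k^2) by nra. assert (0 <= delta*mu k*d) by (assert (0 <= delta*mu k) by nra; nra). nra. }
    assert (0 <= u * ((d+omega+alpha)*delta*d + mu k * (d+omega+alpha) + delta * mu k^2 + delta*mu k*d)) by nra.
    assert (0 < (mu k + d)*(d+omega+alpha) - omega * mu k) by nra.
    assert (0 < (d+omega+alpha+mu k) * ((mu k + d)*(d+omega+alpha) - omega * mu k)) by (apply Rmult_lt_0_compat; lra).
    lra. }
  assert (Hcont : forall a, 0 <= a -> continuity_pt F a).
  { intros a Ha. unfold F. apply cp_mult. apply cp_const.
    apply (sum1n_cont n (fun k x => G x k)). intros k Hk.
    pose proof (HD a k Hk Ha) as HDa. unfold G, Sf, Vf. unfold D in *. cont; cbv beta; lra. }
  assert (Hden0 : forall k, (1<=k<=n)%nat -> denom0 d alpha omega mu k > 0).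
  { intros k Hk. pose proof (Hmu k Hk). unfold denom0. nra. }
  assert (HSfp : forall x k, (1<=k<=n)%nat -> 0 <= x -> Sf x k > 0).
  { intros x k Hk Hx. pose proof (HD x k Hk Hx). pose proof (HLam k Hk). pose proof (Hlam k Hk).
    assert (0 <= delta * lam k * x) by (apply Rmult_le_pos; [apply Rmult_le_pos|]; lra).
    unfold Sf. apply Rdiv_lt_0_compat; [|lra]. apply Rmult_lt_0_compat; lra. }
  assert (HVfp : forall x k, (1<=k<=n)%nat -> 0 <= x -> Vf x k > 0).
  { intros x k Hk Hx. pose proof (HD x k Hk Hx). pose proof (HLam k Hk). pose proof (Hmu k Hk).
    unfold Vf. apply Rdiv_lt_0_compat; [|lra]. apply Rmult_lt_0_compat; lra. }
  assert (HIfp : forall x k, (1<=k<=n)%nat -> 0 < x -> If x k > 0).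
  { intros x k Hk Hx. pose proof (HSfp x k Hk (Rlt_le _ _ Hx)). pose proof (HVfp x k Hk (Rlt_le _ _ Hx)).
    pose proof (Hlam k Hk).
    assert (0 <= delta * Vf x k) by (apply Rmult_le_pos; lra).
    unfold If. apply Rdiv_lt_0_compat; [|lra]. apply Rmult_lt_0_compat; [|lra]. apply Rmult_lt_0_compat; lra. }
  assert (HFT : forall S V I Q Rr, EQ S V I Q Rr -> Theta n p phi I > 0 -> F (Theta n p phi I) = 1).
  { intros S V I Q Rr H HT.
    assert (HI : forall k, (1<=k<=n)%nat -> I k = If (Theta n p phi I) k).
    { intros k Hk. apply (Hform S V I Q Rr H (Rlt_le _ _ HT) k Hk). }
    remember (Theta n p phi I) as T eqn:ET.
    assert (T = T * F T).
    { rewrite <- HTh. rewrite ET at 1. unfold Theta. f_equal. apply sum1n_ext.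
      intros k Hk. rewrite (HI k Hk). reflexivity. }
    apply (Rmult_eq_reg_l T); lra. }
  split.
  { unfold EQ, is_equilibrium. cbv zeta.
    assert (HT0 : Theta n p phi zero = 0).
    { unfold Theta, zero. rewrite (sum1n_ext n _ (fun _ => 0)). rewrite sum1n_zero. ring. intros; ring. }
    rewrite HT0. intros k Hk. pose proof (Hden0 k Hk). unfold E0S, E0V, E0R, zero, R0comp, S0, V0.
    unfold denom0 in *. split; [|split; [|split; [|split]]]; field; lra. }
  split.
  { intros S V I Q Rr H HT. unfold same_state. intros k Hk.
    destruct (Hform S V I Q Rr H (Req_le _ _ (eq_sym HT)) k Hk) as (h1&h2&h3&h4&h5).
    rewrite HT in h1, h2, h3, h4, h5. rewrite h1, h2, h3, h4, h5.
    pose proof (Hden0 k Hk). pose proof (Hmu k Hk).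
    unfold E0S, E0V, E0R, zero, R0comp, S0, V0, Rf, Qf, If, Sf, Vf.
    replace (D 0 k) with (denom0 d alpha omega mu k) by (unfold D, denom0; ring).
    split; [|split; [|split; [|split]]]; field; lra. }
  split.
  { split.
    - intros (S & V & I & Q & Rr & Heq & Hnn & HT).
      pose proof (HFT S V I Q Rr Heq HT).
      pose proof (HFdec 0 (Theta n p phi I) (conj (Rle_refl 0) HT)). lra.
    - intros HR0.
      set (Msum := sum1n n (fun k => phi k * p k * Lam b d Phis k * ((d + omega + alpha) + mu k) / ((gamma + beta + d) * (d + omega + alpha)))).
      assert (HM : Msum > 0).
      { unfold Msum. apply sum1n_pos; auto. intros k Hk.
        pose proof (Hmu k Hk); pose proof (Hp k Hk); pose proof (Hphi k Hk); pose proof (HLam k Hk).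
        apply Rdiv_lt_0_compat; [|apply Rmult_lt_0_compat; lra].
        apply Rmult_lt_0_compat; [|lra]. apply Rmult_lt_0_compat; [|lra]. apply Rmult_lt_0_compat; lra. }
      set (y := / kavg n p * Msum + 1).
      assert (HKi : / kavg n p > 0) by (apply Rinv_0_lt_compat; lra).
      assert (Hy : y > 0) by (unfold y; assert (/ kavg n p * Msum > 0) by (apply Rmult_lt_0_compat; lra); lra).
      assert (HFy : F y < 1).
      { assert (y * F y <= y - 1).
        { unfold F. replace (y * (/ kavg n p * sum1n n (fun k => G y k))) with (/ kavg n p * (y * sum1n n (fun k => G y k))) by ring.
          rewrite <- sum1n_scal. replace (y - 1) with (/ kavg n p * Msum) by (unfold y; ring).
          apply Rmult_le_compat_l; [lra|]. unfold Msum. apply sum1n_le. intros k Hk. apply HGb; auto. }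
        apply (Rmult_lt_reg_l y); lra. }
      destruct (IVT_interv (fun x => 1 - F x) 0 y) as (z & Hz & Hfz).
      { intros a Ha. apply cp_minus. apply cp_const. apply Hcont; lra. }
      { lra. }
      { lra. }
      { lra. }
      assert (Hz0 : z > 0).
      { destruct (Req_dec z 0) as [E|E]; [rewrite E in Hfz; lra | lra]. }
      assert (HTz : Theta n p phi (If z) = z) by (rewrite HTh; assert (HF1 : F z = 1) by lra; rewrite HF1; ring).
      exists (Sf z), (Vf z), (If z), (Qf z), (Rf z).
      split; [|split].
      + unfold EQ, is_equilibrium. cbv zeta. rewrite HTz. intros k Hk.
        pose proof (HD z k Hk (Rlt_le _ _ Hz0)) as HDz. unfold D in HDz.
        unfold Rf, Qf, If, Sf, Vf, D.
        split; [|split; [|split; [|split]]]; field; lra.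
      + unfold nonneg_state. intros k Hk.
        pose proof (HSfp z k Hk (Rlt_le _ _ Hz0)). pose proof (HVfp z k Hk (Rlt_le _ _ Hz0)).
        pose proof (HIfp z k Hk Hz0).
        assert (Qf z k > 0) by (unfold Qf; apply Rdiv_lt_0_compat; [apply Rmult_lt_0_compat|]; lra).
        assert (Rf z k > 0).
        { unfold Rf. apply Rdiv_lt_0_compat; [|lra].
          assert (0 < gamma * If z k) by (apply Rmult_lt_0_compat; lra).
          assert (0 < eta * Qf z k) by (apply Rmult_lt_0_compat; lra).
          assert (0 < alpha * Vf z k) by (apply Rmult_lt_0_compat; lra). lra. }
        repeat split; lra.
      + rewrite HTz. lra. }
  split.
  { intros S V I Q Rr (Heq & Hnn & HT) k Hk.
    destruct (Hform S V I Q Rr Heq (Rlt_le _ _ HT) k Hk) as (h1&h2&h3&h4&h5).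
    rewrite h3. apply HIfp; auto. }
  { intros HR0 S V I Q Rr S' V' I' Q' Rr' (Heq & Hnn & HT) (Heq' & Hnn' & HT').
    pose proof (HFT S V I Q Rr Heq HT). pose proof (HFT S' V' I' Q' Rr' Heq' HT').
    assert (ET : Theta n p phi I = Theta n p phi I').
    { destruct (Rtotal_order (Theta n p phi I) (Theta n p phi I')) as [Hl|[He|Hg]]; auto.
      - pose proof (HFdec _ _ (conj (Rlt_le _ _ HT) Hl)). lra.
      - pose proof (HFdec _ _ (conj (Rlt_le _ _ HT') Hg)). lra. }
    unfold same_state. intros k Hk.
    destruct (Hform S V I Q Rr Heq (Rlt_le _ _ HT) k Hk) as (h1&h2&h3&h4&h5).
    destruct (Hform S' V' I' Q' Rr' Heq' (Rlt_le _ _ HT') k Hk) as (g1&g2&g3&g4&g5).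
    rewrite h1, h2, h3, h4, h5, g1, g2, g3, g4, g5, ET. auto. }
Qed.
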